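(* Let $b\ge 1$, let $L$ be a normalized Latin square of size $b$ over the alphabet $\mathcal A=\{a_1,\dots,a_b\}$, and let $M=\mathcal{E}(L)$ be its encoding matrix. Let $w$ be a word of length $m\ge 1$ over $\mathcal A$ and let $r\ge -1$ be an integer. (1) If $w$ is $r$-regular, then $L(w)$ is $(r+1)$-regular. (2) If $M$ is invertible (as a real matrix) and $L(w)$ is $(r+1)$-regular, then $w$ is $r$-regular. (3) If $M$ is not invertible, then there exist a positive integer $m'$ and a word $w'$ of length $m'$ over $\mathcal A$ such that $L(w')$ is $1$-regular but $w'$ is not $0$-regular.
   Context: Fix an alphabet $\mathcal A=\{a_1,\dots,a_b\}$ of $b$ letters, ordered $a_1<\dots<a_b$; identify $a_q$ with the integer $q$ when convenient. For a word $w=w_1\cdots w_m$ over $\mathcal A$ and an integer $r\ge -1$, $w$ is $r$-regular if for every $k=0,1,\dots,r$ the sum $\sum_{1\le t\le m,\ w_t=x} t^k$ is the same for all letters $x\in\mathcal A$ (a letter not occurring in $w$ contributes the empty sum $0$); every word is $(-1)$-regular. A Latin square of size $b$ over $\mathcal A$ is a $b\times b$ matrix with entries in $\mathcal A$ in which each letter occurs exactly once in each row and each column; it is normalized if its first column is $(a_1,\dots,a_b)^T$, i.e. $L_{q,1}=a_q$. For $k=1,\dots,b$ let $\pi_k$ be the permutation of $\mathcal A$ given by $\pi_k(a_q)=L_{q,k}$ (so $\pi_1=\mathrm{id}$ when $L$ is normalized). For a permutation $\pi$ of $\mathcal A$, $\pi(w_1\cdots w_m)=\pi(w_1)\cdots\pi(w_m)$,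 and $L(w)$ is the concatenation $w\,\pi_2(w)\,\pi_3(w)\cdots\pi_b(w)$, a word of length $bm$. The encoding matrix $M=\mathcal E(L)$ is the $b\times b$ integer matrix defined by $M_{ij}=x$ if and only if $L_{j,x}=a_i$, i.e. $M_{ij}$ is the index of the column in which the letter $a_i$ occurs in row $j$ of $L$. *)

(* Defs.v *)
From HB Require Import structures.
From mathcomp Require Import all_boot all_order all_algebra.
Set Implicit Arguments. Unset Strict Implicit. Unset Printing Implicit Defensive.
Import Order.TTheory GRing.Theory Num.Theory.

(* Alphabet A = {a_1,...,a_b} is represented by 'I_b, with a_q <-> ordinal q-1.
   Words are sequences over 'I_b; positions are 1-indexed. *)

Definition psum (b : nat) (k : nat) (x : 'I_b) (w : seq 'I_b) : nat :=
  \sum_(p <- zip (iota 1 (size w)) w | p.2 == x) p.1 ^ k.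

(* w is r-regular (r : int, r >= -1); every word is (-1)-regular *)
Definition regular (b : nat) (r : int) (w : seq 'I_b) : Prop :=
  forall k : nat, (k%:Z <= r)%R -> forall x y : 'I_b, psum k x w = psum k y w.

Definition latin (b : nat) (L : 'M['I_b]_b) : Prop :=
  (forall i x : 'I_b, #|[set j | L i j == x]| = 1) /\
  (forall j x : 'I_b, #|[set i | L i j == x]| = 1).

Definition normalized (b : nat) (L : 'M['I_b]_b) : Prop :=
  forall q c : 'I_b, val c = 0%N -> L q c = q.

(* pi_k(a_q) = L_{q,k}; L(w) = w pi_2(w) ... pi_b(w) *)
Definition Lword (b : nat) (L : 'M['I_b]_b) (w : seq 'I_b) : seq 'I_b :=
  flatten [seq [seq L x k | x <- w] | k <- enum 'I_b].

(* encoding matrix: M_{ij} = x iff L_{j,x} = a_i (x the 1-indexed column) *)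
Definition encoding (b : nat) (L : 'M['I_b]_b) : 'M[rat]_b :=
  \matrix_(i < b, j < b)
    match [pick c : 'I_b | L j c == i] with
    | Some c => ((val c).+1)%:R%R
    | None => 0%R
    end.

(* Main.v *)
Require Import Defs.
From HB Require Import structures.
From mathcomp Require Import all_boot all_order all_algebra.
From mathcomp Require Import ring zify.
Import Order.TTheory GRing.Theory Num.Theory.
Set Implicit Arguments. Unset Strict Implicit.

Section PS.
Variable b : nat.

Definition ps (s k : nat) (x : 'I_b) (w : seq 'I_b) : nat :=
  \sum_(p <- zip (iota s (size w)) w | p.2 == x) p.1 ^ k.

Lemma psumE k x w : psum k x w = ps 1 k x w. Proof. by []. Qed.

Lemma ps_nil s k x : ps s k x [::] = 0.
Proof. by rewrite /ps big_nil. Qed.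

Lemma ps_cons s k x z w : ps s k x (z :: w) = (z == x) * s ^ k + ps s.+1 k x w.
Proof. rewrite /ps /=. rewrite big_cons /=. by case: (z == x) => /=; rewrite ?mul1n ?mul0n. Qed.

Lemma ps_cat s k x u v : ps s k x (u ++ v) = ps s k x u + ps (s + size u) k x v.
Proof.
elim: u s => [|z u IH] s /=; first by rewrite ps_nil addn0.
by rewrite !ps_cons IH addnA addSnnS.
Qed.

Lemma ps_shift s d j x w :
  ps (s + d) j x w = \sum_(i < j.+1) 'C(j, i) * d ^ (j - i) * ps s i x w.
Proof.
elim: w s => [|z w IH] s.
  by rewrite ps_nil big1 // => i _; rewrite ps_nil muln0.
rewrite ps_cons -addSn IH.
under [in RHS]eq_bigr => i _ do rewrite ps_cons mulnDr.
rewrite big_split /=; congr (_ + _).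
rewrite addnC expnDn big_distrr /=; apply: eq_bigr => i _; ring.
Qed.

Lemma ps_flatten s k x m (g : seq (seq 'I_b)) :
  (forall bl, bl \in g -> size bl = m) ->
  ps s k x (flatten g) = \sum_(0 <= i < size g) ps (s + i * m) k x (nth [::] g i).
Proof.
elim: g s => [|bl g IH] s Hg /=; first by rewrite big_nil ps_nil.
rewrite ps_cat IH; last by move=> c Hc; apply: Hg; rewrite inE Hc orbT.
rewrite big_nat_recl // /= mul0n addn0 Hg ?mem_head //; congr (_ + _).
by apply: eq_bigr => i _; rewrite mulSn addnA.
Qed.

Lemma ps_map s k y (f : 'I_b -> 'I_b) w :
  ps s k y (map f w) = \sum_(x | f x == y) ps s k x w.
Proof.
elim: w s => [|z w IH] s /=.
  by rewrite ps_nil big1 // => x _; rewrite ps_nil.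
rewrite ps_cons IH.
under [in RHS]eq_bigr => x _ do rewrite ps_cons.
rewrite big_split /=; congr (_ + _).
case: (eqVneq (f z) y) => Hz.
  rewrite (bigD1 z) ?Hz //= eqxx big1 ?addn0 //.
  move=> x /andP[_ Hx]; by rewrite eq_sym (negbTE Hx).
rewrite mul0n big1 // => x Hx.
case: (eqVneq z x) => [E|_]; last by rewrite mul0n.
by subst; rewrite Hx in Hz.
Qed.

End PS.

Section Latin.
Variable b : nat.
Variable L : 'M['I_b]_b.
Hypothesis HL : latin L.

Definition xr (c y : 'I_b) : 'I_b := odflt y [pick x | L x c == y].
Definition colf (x y : 'I_b) : 'I_b := odflt y [pick c | L x c == y].

Lemma xrP c y : L (xr c y) c = y.
Proof.
rewrite /xr; case: pickP => [x /eqP //|H].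
have := HL.2 c y.
have -> : [set i | L i c == y] = set0 by apply/setP=> i; rewrite !inE H.
by rewrite cards0.
Qed.

Lemma xr_uniq c y x : L x c = y -> x = xr c y.
Proof.
move=> Hx; have /eqP/cards1P[a Ha] := HL.2 c y.
have H1 : x \in [set i | L i c == y] by rewrite inE Hx.
have H2 : xr c y \in [set i | L i c == y] by rewrite inE xrP.
by move: H1 H2; rewrite Ha !inE => /eqP -> /eqP ->.
Qed.

Lemma colfP x y : L x (colf x y) = y.
Proof.
rewrite /colf; case: pickP => [c /eqP //|H].
have := HL.1 x y.
have -> : [set j | L x j == y] = set0 by apply/setP=> i; rewrite !inE H.
by rewrite cards0.
Qed.

Lemma colf_uniq x y c : L x c = y -> c = colf x y.
Proof.
move=> Hx; have /eqP/cards1P[a Ha] := HL.1 x y.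
have H1 : c \in [set j | L x j == y] by rewrite inE Hx.
have H2 : colf x y \in [set j | L x j == y] by rewrite inE colfP.
by move: H1 H2; rewrite Ha !inE => /eqP -> /eqP ->.
Qed.

Lemma colf_xr c y : colf (xr c y) y = c.
Proof. by apply/esym/colf_uniq; rewrite xrP. Qed.

Lemma xr_inj y : injective (fun c => xr c y).
Proof. by move=> c c' /= E; rewrite -(colf_xr c y) E colf_xr. Qed.

Lemma sum_xr y (F : 'I_b -> nat) : \sum_(c < b) F (xr c y) = \sum_(x < b) F x.
Proof. by rewrite [RHS](reindex_inj (@xr_inj y)). Qed.

Lemma encodingE y x : encoding L y x = ((colf x y).+1)%:R%R.
Proof.
rewrite /encoding mxE /colf; case: pickP => [c //|H].
by have := H (colf x y); rewrite colfP eqxx.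
Qed.

Lemma Lword_ps w j y : ps 1 j y (Lword L w) =
  \sum_(c < b) \sum_(i < j.+1) 'C(j, i) * (c * size w) ^ (j - i) * ps 1 i (xr c y) w.
Proof.
rewrite /Lword (@ps_flatten _ _ _ _ (size w)); last first.
  by move=> bl /mapP[c _ ->]; rewrite size_map.
rewrite size_map size_enum_ord big_mkord; apply: eq_bigr => c _.
rewrite (nth_map c) ?size_enum_ord // nth_ord_enum ps_map.
rewrite (eq_bigl (fun x => x == xr c y)); last first.
  by move=> x; apply/eqP/eqP => [/xr_uniq|->]; rewrite ?xrP.
by rewrite big_pred1_eq ps_shift.
Qed.

End Latin.

Section Parts.
Variable b : nat.
Variable L : 'M['I_b]_b.
Hypothesis HL : latin L.

Lemma split_top w j y : ps 1 j y (Lword L w) =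
  \sum_(c < b) \sum_(i < j) 'C(j, i) * (c * size w) ^ (j - i) * ps 1 i (xr L c y) w
  + \sum_(x < b) ps 1 j x w.
Proof.
rewrite Lword_ps //.
under eq_bigr => c _ do rewrite big_ord_recr /= binn subnn expn0 !mul1n.
by rewrite big_split /= (sum_xr HL y (fun x => ps 1 j x w)).
Qed.

Lemma part1 w (r : int) : regular r w -> regular (r + 1) (Lword L w).
Proof.
move=> Hr j Hj y y'; rewrite !psumE !split_top; congr (_ + _).
apply: eq_bigr => c _; apply: eq_bigr => i _.
rewrite -!psumE (Hr i _ (xr L c y) (xr L c y')) //.
have := ltn_ord i; lia.
Qed.

End Parts.

Section LinAlg.
Variable b : nat.
Variable L : 'M['I_b]_b.
Hypothesis HL : latin L.
Local Open Scope ring_scope.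

Lemma M_mulE (u : 'cV[rat]_b) y :
  (encoding L *m u) y 0 = \sum_x ((colf L x y).+1)%:R * u x 0.
Proof. by rewrite mxE; apply: eq_bigr => x _; rewrite encodingE. Qed.

Lemma sum_colf_nat y (F : 'I_b -> nat) :
  (\sum_x colf L x y * F x = \sum_(c < b) c * F (xr L c y))%N.
Proof.
rewrite [LHS](reindex_inj (@xr_inj _ _ HL y)) /=.
by apply: eq_bigr => c _; rewrite colf_xr.
Qed.

Lemma M_col (P : 'I_b -> nat) y :
  (encoding L *m \col_x (P x)%:R) y 0 =
  ((\sum_(c < b) c * P (xr L c y)) + \sum_x P x)%N%:R.
Proof.
rewrite M_mulE -sum_colf_nat -big_split /= natr_sum; apply: eq_bigr => x _.
by rewrite mxE -natrM mulSn addnC.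
Qed.

Lemma M_one y :
  (encoding L *m (const_mx 1 : 'cV[rat]_b)) y 0 = (\sum_(c < b) c.+1)%N%:R.
Proof.
have := M_col (fun _ => 1%N) y.
rewrite (_ : \col_x (1%N)%:R = (const_mx 1 : 'cV[rat]_b)); last by apply/matrixP=> i j; rewrite !mxE.
move=> ->; congr (_ %:R); rewrite -big_split /=.
by apply: eq_bigr => c _; rewrite muln1 addn1.
Qed.

Lemma const_from_M (P : 'I_b -> nat) : encoding L \in unitmx ->
  (forall y y', (\sum_(c < b) c * P (xr L c y) = \sum_(c < b) c * P (xr L c y'))%N) ->
  forall x x', P x = P x'.
Proof.
move=> HU HG x0 x1.
pose v : 'cV[rat]_b := \col_x (P x)%:R.
pose one : 'cV[rat]_b := const_mx 1.
pose s : rat := (\sum_(c < b) c.+1)%N%:R.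
have s0 : s != 0.
  rewrite /s pnatr_eq0 -lt0n (bigD1 x0) //=.
pose a : rat := ((\sum_(c < b) c * P (xr L c x0)) + \sum_x P x)%N%:R / s.
have H0 : encoding L *m (v - a *: one) = 0.
  have Mv : encoding L *m v = ((\sum_(c < b) c * P (xr L c x0)) + \sum_x P x)%N%:R *: one.
    by apply/matrixP=> y j; rewrite ord1 M_col (HG y x0) !mxE mulr1.
  have Mone : encoding L *m one = s *: one.
    by apply/matrixP=> y j; rewrite ord1 M_one !mxE mulr1.
  by rewrite mulmxBr -scalemxAr Mv Mone scalerA /a mulfVK // subrr.
have Hv : v = a *: one.
  apply/eqP; rewrite -subr_eq0; apply/eqP.
  by rewrite -(mulKmx HU (v - _)) H0 mulmx0.
have E : forall x, (P x)%:R = a :> rat.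
  move=> x; have := congr1 (fun A : 'cV[rat]_b => A x 0) Hv.
  by rewrite /v /one !mxE mulr1.
by apply/eqP; rewrite -(eqr_nat rat) !E.
Qed.

End LinAlg.

Section Part2.
Variable b : nat.
Variable L : 'M['I_b]_b.
Hypothesis HL : latin L.

Lemma part2 w (r : int) : encoding L \in unitmx -> (0 < size w)%N ->
  regular (r + 1) (Lword L w) -> regular r w.
Proof.
move=> HU Hm HR k; elim/ltn_ind: k => k IH Hk.
apply: (@const_from_M _ L HL (fun x => ps 1 k x w) HU) => y y'.
have : (k.+1%:Z <= r + 1)%R by lia.
move=> /HR /(_ y y'); rewrite !psumE !split_top // => /addIn.
under eq_bigr => c _ do rewrite big_ord_recr /=.
under [in X in _ = X -> _]eq_bigr => c _ do rewrite big_ord_recr /=.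
rewrite !big_split /=.
set X := \sum_(c < b) \sum_(i < k) _.
set X' := \sum_(c < b) \sum_(i < k) _.
have -> : X = X'.
  apply: eq_bigr => c _; apply: eq_bigr => i _.
  rewrite -!psumE (IH i (ltn_ord i) _ (xr L c y) (xr L c y')) //.
  have := ltn_ord i; lia.
move/addnI; rewrite binSn subSnn.
under eq_bigr => c _ do rewrite expn1 (mulnC c) mulnA -mulnA.
under [in X in _ = X -> _]eq_bigr => c _ do rewrite expn1 (mulnC c) mulnA -mulnA.
by rewrite -!big_distrr /= => /eqP; rewrite eqn_pmul2l ?muln_gt0 // => /eqP.
Qed.

End Part2.

Lemma ps0_count b s (x : 'I_b) w : ps s 0 x w = count_mem x w.
Proof.
elim: w s => [|z w IH] s; first by rewrite ps_nil.
by rewrite ps_cons IH expn0 muln1 /=.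
Qed.

Lemma count_word b (n : 'I_b -> nat) x :
  count_mem x (flatten [seq nseq (n z) z | z <- enum 'I_b]) = n x.
Proof.
rewrite count_flatten sumnE !big_map.
rewrite (bigD1 x) //= count_nseq /= eqxx mul1n big1 ?addn0 //.
by move=> z Hz; rewrite count_nseq /= ?(negbTE Hz) ?eq_sym ?(negbTE Hz).
Qed.

Section Part3.
Variable b : nat.
Variable L : 'M['I_b]_b.
Hypothesis HL : latin L.
Local Open Scope ring_scope.

Lemma sumM y : \sum_x encoding L y x = (\sum_(c < b) c.+1)%N%:R.
Proof.
under eq_bigr => x _ do rewrite encodingE //.
rewrite -natr_sum; congr (_ %:R).
by rewrite -(sum_xr HL y (fun x => (colf L x y).+1)); apply: eq_bigr => c _; rewrite colf_xr.
Qed.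

Lemma part3 : (0 < b)%N -> encoding L \notin unitmx ->
  exists w' : seq 'I_b, (0 < size w')%N /\ regular 1 (Lword L w') /\ ~ regular 0 w'.
Proof.
move=> b0 HU.
have x0 : 'I_b := Ordinal b0.
have : \det (encoding L)^T == 0 by move: HU; rewrite det_tr unitmxE unitfE negbK.
case/det0P => v v0 Hv.
have Hvy : forall y, \sum_x encoding L y x * v 0 x = 0.
  move=> y; have E : (v *m (encoding L)^T) 0 y = 0 by rewrite Hv mxE.
  rewrite -[RHS]E mxE; by apply: eq_bigr => x _; rewrite [in RHS]mxE mulrC.
pose D : int := \prod_x denq (v 0 x).
pose zi (x : 'I_b) : int := numq (v 0 x) * \prod_(x' | x' != x) denq (v 0 x').
have D0 : D != 0 by rewrite /D lt0r_neq0 // prodr_gt0 // => x _; exact: denq_gt0.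
have Hzi : forall x, (zi x)%:~R = D%:~R * v 0 x :> rat.
  move=> x; rewrite /zi /D [in RHS](bigD1 x) //= !intrM numqE; ring.
pose K : nat := (\sum_x absz (zi x) + 1)%N.
have HK : forall x, (0 < zi x + K%:Z)%R.
  move=> x; have : (absz (zi x) <= \sum_x absz (zi x))%N.
    by rewrite (bigD1 x) //= leq_addr.
  rewrite /K; lia.
pose n (x : 'I_b) : nat := absz (zi x + K%:Z).
have Hn : forall x, (n x)%:Z = zi x + K%:Z by move=> x; rewrite /n gez0_abs // ltW.
have Hn1 : forall x, (0 < n x)%N by move=> x; have := HK x; have := Hn x; lia.
have HnR : forall x, (n x)%:R = D%:~R * v 0 x + K%:R :> rat.
  move=> x; rewrite -Hzi; have -> : (n x)%:R = ((n x)%:Z)%:~R :> rat by [].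
  by rewrite Hn intrD.
pose s : nat := (\sum_(c < b) c.+1)%N.
pose G (y : 'I_b) : nat := (\sum_(c < b) c * n (xr L c y))%N.
have HG : forall y y', G y = G y'.
  have E : forall y, (G y + \sum_x n x)%N%:R = (K * s)%N%:R :> rat.
    move=> y; rewrite -(M_col HL) [LHS]mxE.
    under eq_bigr => x _ do rewrite [X in _ * X]mxE HnR mulrDr.
    rewrite big_split /=.
    under eq_bigr => x _ do rewrite mulrCA.
    by rewrite -mulr_sumr Hvy mulr0 add0r -mulr_suml sumM mulrC natrM.
  by move=> y y'; apply/eqP; rewrite -(eqn_add2r (\sum_x n x)) -(eqr_nat rat) !E.
pose w' := flatten [seq nseq (n z) z | z <- enum 'I_b].
have Hcnt : forall x, psum 0 x w' = n x by move=> x; rewrite psumE ps0_count count_word.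
exists w'; split; [|split].
- have := count_size (pred1 x0) w'; have := Hcnt x0; rewrite psumE ps0_count.
  by move=> ->; apply: leq_trans; exact: Hn1.
- move=> j Hj y y'; rewrite !psumE !split_top //; congr (_ + _)%N.
  case: j Hj => [|[|j]] Hj; last by exfalso; lia.
  + by rewrite !big1 // => c _; rewrite big_ord0.
  + under eq_bigr => c _ do rewrite big_ord1 /= bin0 subn0 expn1 mul1n -psumE Hcnt (mulnC c) -mulnA.
    under [in RHS]eq_bigr => c _ do rewrite big_ord1 /= bin0 subn0 expn1 mul1n -psumE Hcnt (mulnC c) -mulnA.
    by rewrite -!big_distrr /= -/(G y) -/(G y') (HG y y').
- move=> Hreg.
  have Hc : forall x, v 0 x = v 0 x0.
    move=> x; have := Hreg 0%N (lexx _) x x0; rewrite !Hcnt => /(congr1 (fun k => k%:R : rat)).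
    rewrite !HnR => /addIr /mulfI; apply; by rewrite intr_eq0.
  move/eqP: v0; apply.
  have Ha : v 0 x0 = 0.
    have := Hvy x0.
    under eq_bigr => x _ do rewrite Hc mulrC.
    rewrite -mulr_sumr sumM => /eqP; rewrite mulf_eq0 pnatr_eq0 => /orP[/eqP //|].
    by rewrite /= (bigD1 x0).
  by apply/matrixP => i j; rewrite ord1 !mxE Hc Ha.
Qed.

End Part3.

Unset Implicit Arguments.
Set Strict Implicit.

Theorem mainTheorem2 (b : nat) (L : 'M['I_b]_b) :
  (0 < b)%N -> latin L -> normalized L ->
  (forall (w : seq 'I_b) (r : int), (0 < size w)%N -> (-1 <= r)%R ->
     (regular r w -> regular (r + 1) (Lword L w)) /\
     (encoding L \in unitmx -> regular (r + 1) (Lword L w) -> regular r w)) /\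
  (encoding L \notin unitmx ->
     exists w' : seq 'I_b, (0 < size w')%N /\ regular 1 (Lword L w') /\ ~ regular 0 w').
Proof.
move=> b0 HL HN; split.
- move=> w r Hm Hr; split; first exact: part1.
  by move=> HU; apply: part2.
- exact: part3.
Qed.
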